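(* Let $E>0$, $T>0$, $r,q\ge 0$ be constants and let $\beta:\mathbb{R}\to\mathbb{R}$ be a (sufficiently smooth) function. Let $V(t,S)$, $t\in[0,T]$, $S>0$, be a given (sufficiently smooth) function. Introduce the variables $u=\ln(S/E)$ and $\tau=T-t$, and define $$Y(\tau,u):=\partial_t V+(r-q)S\partial_S V+ S\, \beta(S\partial_S^2 V)-rV,$$ $$H(\tau,u):=S\,\partial^2_S V(t,S),$$ where the right-hand sides are evaluated at $t=T-\tau$, $S=Ee^{u}$. Then $$-\partial_\tau H+\partial_u\beta(H)+\partial^2_u\beta(H)+(r-q)\partial_u H-qH=\frac{1}{E}e^{-u}\left[\partial_u^2 Y-\partial_u Y\right].$$
   Context: In the paper $\beta(H)=\frac12\hat\sigma(H)^2H$ for a nonlinear volatility function $\hat\sigma$, $r$ is the interest rate, $q$ the dividend yield, $E$ the strike price and $T$ the maturity; the identity holds for a general function $\beta$. *)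

(* Defs.v *)
From Stdlib Require Import Reals List.
From Coquelicot Require Import Coquelicot.
Open Scope R_scope.

Definition d1 (f : R -> R -> R) (t S : R) : R := Derive (fun x => f x S) t.
Definition d2 (f : R -> R -> R) (t S : R) : R := Derive (fun y => f t y) S.

(* Iterated partial derivative along a word: true = d/dt, false = d/dS
   (the head of the list is applied last). *)
Fixpoint iter_partial (w : list bool) (f : R -> R -> R) : R -> R -> R :=
  match w with
  | nil => f
  | b :: w' => (if b then d1 else d2) (iter_partial w' f)
  end.

Definition smooth2_on (D : R -> R -> Prop) (f : R -> R -> R) : Prop :=
  forall (w : list bool) (t S : R), D t S ->
    ex_derive (fun x => iter_partial w f x S) t /\
    ex_derive (fun y => iter_partial w f t y) S /\
    continuous (fun p : R * R => iter_partial w f (fst p) (snd p)) (t, S).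

Definition smooth1 (g : R -> R) : Prop :=
  forall (n : nat) (x : R), ex_derive (Derive_n g n) x.

Definition Hfun (E T : R) (V : R -> R -> R) (tau u : R) : R :=
  let S := E * exp u in S * d2 (d2 V) (T - tau) S.

Definition Yfun (E T r q : R) (beta : R -> R) (V : R -> R -> R) (tau u : R) : R :=
  let t := T - tau in
  let S := E * exp u in
  d1 V t S + (r - q) * S * d2 V t S + S * beta (S * d2 (d2 V) t S) - r * V t S.

(* Main.v *)
Require Import Defs.
From Stdlib Require Import Reals List Lra.
From Coquelicot Require Import Coquelicot.
Open Scope R_scope.

Lemma dR_plus (f g : R -> R) x a b :
  is_derive f x a -> is_derive g x b -> is_derive (fun y => f y + g y) x (a + b).
Proof. intros. apply (is_derive_plus f g x a b); auto. Qed.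
Lemma dR_minus (f g : R -> R) x a b :
  is_derive f x a -> is_derive g x b -> is_derive (fun y => f y - g y) x (a - b).
Proof. intros. apply (is_derive_minus f g x a b); auto. Qed.
Lemma dR_mult (f g : R -> R) x a b :
  is_derive f x a -> is_derive g x b -> is_derive (fun y => f y * g y) x (a * g x + f x * b).
Proof. intros. apply (is_derive_mult f g x a b); auto. intros; apply Rmult_comm. Qed.
Lemma dR_scal (f : R -> R) x k a :
  is_derive f x a -> is_derive (fun y => k * f y) x (k * a).
Proof. apply is_derive_scal. Qed.
Lemma dR_comp (f g : R -> R) x a b :
  is_derive f (g x) a -> is_derive g x b -> is_derive (fun y => f (g y)) x (a * b).
Proof. intros. rewrite Rmult_comm. apply (is_derive_comp f g x a b); auto. Qed.
Lemma dR_eq (f : R -> R) (x a b : R) : is_derive f x a -> @eq R a b -> is_derive f x b.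
Proof. intros; subst; auto. Qed.
Lemma dR_ext (f g : R -> R) x a : (forall y, f y = g y) -> is_derive f x a -> is_derive g x a.
Proof. intros. apply (is_derive_ext f g); auto. Qed.

Lemma iter_app w1 w2 f : iter_partial w1 (iter_partial w2 f) = iter_partial (w1 ++ w2) f.
Proof. induction w1; simpl; [reflexivity| rewrite IHw1; reflexivity]. Qed.

Lemma smooth_iter D f w : smooth2_on D f -> smooth2_on D (iter_partial w f).
Proof. intros H w' t S HD. rewrite iter_app. apply H; auto. Qed.

Lemma loc_D T t S : 0 < t < T -> 0 < S ->
  locally_2d (fun a b => 0 < a < T /\ 0 < b) t S.
Proof.
  intros Ht HS.
  assert (Hp : 0 < Rmin t (Rmin (T - t) S)).
  { apply Rmin_pos; [lra| apply Rmin_pos; lra]. }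
  exists (mkposreal _ Hp). simpl. intros a b Ha Hb.
  pose proof (Rmin_l t (Rmin (T - t) S)).
  pose proof (Rmin_r t (Rmin (T - t) S)).
  pose proof (Rmin_l (T - t) S). pose proof (Rmin_r (T - t) S).
  apply Rabs_def2 in Ha. apply Rabs_def2 in Hb. lra.
Qed.

Lemma schwarz_D T W t S : smooth2_on (fun a b => 0 < a < T /\ 0 < b) W ->
  0 < t < T -> 0 < S -> Defs.d1 (Defs.d2 W) t S = Defs.d2 (Defs.d1 W) t S.
Proof.
  intros HW Ht HS. unfold Defs.d1, Defs.d2.
  apply Schwarz.
  - destruct (loc_D T t S Ht HS) as [d Hd]. exists d. intros a b Ha Hb.
    specialize (Hd a b Ha Hb).
    split; [exact (proj1 (HW nil a b Hd))|].
    split; [exact (proj1 (proj2 (HW nil a b Hd)))|].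
    split; [exact (proj1 (HW (false :: nil) a b Hd))|].
    exact (proj1 (proj2 (HW (true :: nil) a b Hd))).
  - apply continuity_2d_pt_filterlim.
    exact (proj2 (proj2 (HW (true :: false :: nil) t S (conj Ht HS)))).
  - apply continuity_2d_pt_filterlim.
    exact (proj2 (proj2 (HW (false :: true :: nil) t S (conj Ht HS)))).
Qed.

Theorem lemma2 (E T r q : R) (beta : R -> R) (V : R -> R -> R) :
  0 < E -> 0 < T -> 0 <= r -> 0 <= q ->
  smooth1 beta ->
  smooth2_on (fun t S => 0 < t < T /\ 0 < S) V ->
  forall tau u : R, 0 < tau < T ->
    - Derive (fun s => Hfun E T V s u) tau
    + Derive (fun v => beta (Hfun E T V tau v)) u
    + Derive (fun w => Derive (fun v => beta (Hfun E T V tau v)) w) u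
    + (r - q) * Derive (fun v => Hfun E T V tau v) u
    - q * Hfun E T V tau u
    = / E * exp (- u) *
      (Derive (fun w => Derive (fun v => Yfun E T r q beta V tau v) w) u
       - Derive (fun v => Yfun E T r q beta V tau v) u).
Proof.
  intros HE HT Hr Hq Hb HV tau u Htau.
  assert (Ht0 : 0 < T - tau < T) by lra.
  pose (P := fun v => E * exp v).
  assert (HP : forall v, 0 < P v).
  { intro v; unfold P; apply Rmult_lt_0_compat; [lra | apply exp_pos]. }
  assert (dP : forall v, is_derive P v (P v)).
  { intro v. unfold P. apply (dR_eq _ _ (E * exp v)).
    apply dR_scal. apply is_derive_exp. reflexivity. }
  pose (Vw := fun w v => iter_partial w V (T - tau) (P v)).
  assert (dVw : forall w v, is_derive (Vw w) v (P v * Vw (false :: w) v)).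
  { intros w v. destruct (HV w (T - tau) (P v) (conj Ht0 (HP v))) as [_ [H2 _]].
    apply (dR_eq _ _ (Derive (fun y => iter_partial w V (T - tau) y) (P v) * P v)).
    - apply (dR_comp (fun y => iter_partial w V (T - tau) y) P).
      + apply Derive_correct; exact H2.
      + apply dP.
    - unfold Vw; simpl; unfold Defs.d2; ring. }
  pose (ff := false :: false :: nil).
  pose (Hh := fun v => P v * Vw ff v).
  pose (H' := fun v => P v * Vw ff v + P v * (P v * Vw (false :: ff) v)).
  assert (dH : forall v, is_derive Hh v (H' v)).
  { intro v. eapply dR_eq. apply dR_mult; [apply dP | apply dVw].
    unfold H'; ring. }
  assert (exH' : forall v, ex_derive H' v).
  { intro v. eexists. apply dR_plus; [apply dR_mult; [apply dP | apply dVw] |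
      apply dR_mult; [apply dP | apply dR_mult; [apply dP | apply dVw]]]. }
  assert (dB : forall x, is_derive beta x (Derive beta x)).
  { intro x. apply Derive_correct. exact (Hb 0%nat x). }
  assert (exDB : forall x, ex_derive (Derive beta) x).
  { intro x. exact (Hb 1%nat x). }
  pose (DB := fun v => Derive beta (Hh v) * H' v).
  assert (dBH : forall v, is_derive (fun v => beta (Hh v)) v (DB v)).
  { intro v. apply dR_comp; [apply dB | apply dH]. }
  assert (exDBd : ex_derive DB u).
  { eexists. apply dR_mult; [apply dR_comp; [apply Derive_correct, exDB | apply dH] |
      apply Derive_correct, exH']. }
  pose (G := fun v => Vw (false :: true :: nil) v + (r - q) * Vw (false :: nil) v
     + (r - q) * Hh v + beta (Hh v) + DB v - r * Vw (false :: nil) v).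
  assert (dY : forall v, is_derive (fun v => Yfun E T r q beta V tau v) v (P v * G v)).
  { intro v.
    apply (dR_ext (fun v => Vw (true :: nil) v + (r - q) * P v * Vw (false :: nil) v
       + P v * beta (Hh v) - r * Vw nil v)). { intro; reflexivity. }
    eapply dR_eq.
    - apply dR_minus; [apply dR_plus; [apply dR_plus; [apply dVw | ] | ] | apply dR_scal, dVw].
      + apply dR_mult; [apply dR_scal, dP | apply dVw].
      + apply dR_mult; [apply dP | apply dBH].
    - unfold G, Hh, ff; ring. }
  pose (X := iter_partial (true :: ff) V (T - tau) (P u)).
  assert (HX : Vw (false :: false :: true :: nil) u = X).
  { unfold Vw, X, ff. simpl.
    assert (Hl : locally (P u) (fun y => 0 < y)).
    { pose proof (locally_2d_1d_const_x (fun a b => 0 < a < T /\ 0 < b) (T - tau) (P u)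
        (loc_D T (T - tau) (P u) Ht0 (HP u))) as L.
      revert L. apply filter_imp. intros y [_ Hy]; exact Hy. }
    unfold Defs.d2 at 1.
    rewrite (Derive_ext_loc _ (fun y => Defs.d1 (Defs.d2 V) (T - tau) y)).
    2:{ revert Hl. apply filter_imp. intros y Hy.
        symmetry. apply (schwarz_D T V); auto. }
    change (Defs.d2 (Defs.d1 (Defs.d2 V)) (T - tau) (P u) = Defs.d1 (Defs.d2 (Defs.d2 V)) (T - tau) (P u)).
    symmetry. apply (schwarz_D T (Defs.d2 V)); auto.
    apply (smooth_iter _ V (false :: nil)); auto. }
  assert (Htau_d : Derive (fun s => Hfun E T V s u) tau = P u * (X * -1)).
  { apply is_derive_unique.
    apply (dR_ext (fun s => P u * iter_partial ff V (T - s) (P u))). { intro; reflexivity. }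
    apply dR_scal. apply (dR_comp (fun x => iter_partial ff V x (P u)) (fun s => T - s)).
    - apply Derive_correct. exact (proj1 (HV ff (T - tau) (P u) (conj Ht0 (HP u)))).
    - auto_derive; auto; ring. }
  rewrite Htau_d.
  replace (Derive (fun v => beta (Hfun E T V tau v)) u) with (DB u)
    by (symmetry; apply is_derive_unique; apply dBH).
  rewrite (Derive_ext (fun w => Derive (fun v => beta (Hfun E T V tau v)) w) DB).
  2:{ intro w. apply is_derive_unique. apply dBH. }
  replace (Derive (fun v => Hfun E T V tau v) u) with (H' u)
    by (symmetry; apply is_derive_unique; apply dH).
  replace (Derive (fun v => Yfun E T r q beta V tau v) u) with (P u * G u)
    by (symmetry; apply is_derive_unique; apply dY).
  rewrite (Derive_ext (fun w => Derive (fun v => Yfun E T r q beta V tau v) w) (fun w => P w * G w)).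
  2:{ intro w. apply is_derive_unique. apply dY. }
  assert (dG : is_derive G u (P u * Vw (false :: false :: true :: nil) u
     + (r - q) * (P u * Vw ff u) + (r - q) * H' u + DB u + Derive DB u
     - r * (P u * Vw ff u))).
  { eapply dR_eq.
    - apply dR_minus; [| apply dR_scal, dVw].
      apply dR_plus; [| apply Derive_correct, exDBd].
      apply dR_plus; [| apply dBH].
      apply dR_plus; [| apply dR_scal, dH].
      apply dR_plus; [apply dVw | apply dR_scal, dVw].
    - reflexivity. }
  match goal with |- context [Derive (fun w => P w * G w) u] =>
    replace (Derive (fun w => P w * G w) u) with
     (P u * G u + P u * (P u * Vw (false :: false :: true :: nil) u
     + (r - q) * (P u * Vw ff u) + (r - q) * H' u + DB u + Derive DB u
     - r * (P u * Vw ff u)))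
    by (symmetry; apply is_derive_unique; exact (dR_mult P G u _ _ (dP u) dG)) end.
  rewrite HX. change (Hfun E T V tau u) with (Hh u).
  unfold Hh. rewrite exp_Ropp. unfold P.
  assert (exp u <> 0) by (apply Rgt_not_eq, exp_pos).
  field. lra.
Qed.
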